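(* In the setting described in the context, there exists a constant $C$ (independent of $\gamma$ and $\lambda_0$) such that for every $\gamma \in (0,\frac12)$, every $\lambda_0 > 1$ and every $0 \leq k \leq q$: $|d\hat u_k| \leq C$ at each point of $\mathbb{R}^n$; $\hat u_k$ is a convex function; and the Euclidean Hessian of $\hat u_k$ is bounded in norm by $C\lambda_k$ at each point of $\mathbb{R}^n$.
   Context: $n\ge 3$, $u_0,\dots,u_q$ are non-constant linear (affine) functions on $\mathbb{R}^n$ whose Euclidean gradients are unit vectors, and $\Omega=\bigcap_{m=0}^q\{u_m\le 0\}$ is a compact convex polytope with non-empty interior. Fix a smooth even function $\eta:\mathbb{R}\to\mathbb{R}$ with $\eta(t)=|t|$ for $|t|\ge \frac12$ and $\eta''\ge 0$ everywhere. For $\gamma\in(0,\frac12)$ and $\lambda_0>1$ set $\lambda_0$ as given and $\lambda_k=\gamma^{-k}\lambda_0$ for $1\le k\le q$. Define $\hat u_0=u_0$ and, for $1\le k\le q$, $\hat u_k=\frac12\big(\hat u_{k-1}+u_k+\lambda_k^{-1}\eta(\lambda_k(\hat u_{k-1}-u_k))\big)$. *)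

(* Defs.v *)
From HB Require Import structures.
From mathcomp Require Import all_boot all_order all_algebra.
From mathcomp Require Import all_classical all_reals all_analysis.
Set Implicit Arguments. Unset Strict Implicit. Unset Printing Implicit Defensive.
Import Order.TTheory GRing.Theory Num.Theory.
Import numFieldNormedType.Exports.
Local Open Scope ring_scope.
Local Open Scope classical_set_scope.

Section Defs.
Variables (R : realType) (n : nat).

Definition dotv (v w : 'rV[R]_n) : R := \sum_(i < n) v ord0 i * w ord0 i.
Definition enorm (v : 'rV[R]_n) : R := Num.sqrt (dotv v v).

Definition evec (i : 'I_n) : 'rV[R]_n := delta_mx ord0 i.

Definition affine_fun (a : 'rV[R]_n) (b : R) (x : 'rV[R]_n) : R := dotv a x + b.

Definition grad (f : 'rV[R]_n -> R) (x : 'rV[R]_n) : 'rV[R]_n :=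
  \row_i derive f x (evec i).
Definition hess (f : 'rV[R]_n -> R) (x : 'rV[R]_n) : 'M[R]_n :=
  \matrix_(i, j) derive (fun y => derive f y (evec i)) x (evec j).

Definition bilin (H : 'M[R]_n) (v w : 'rV[R]_n) : R :=
  \sum_(i < n) \sum_(j < n) v ord0 i * H i j * w ord0 j.

Definition convex_fun (f : 'rV[R]_n -> R) : Prop :=
  forall x y (t : R), 0 <= t -> t <= 1 ->
    f (t *: x + (1 - t) *: y) <= t * f x + (1 - t) * f y.

Definition lam (gamma lambda0 : R) (k : nat) : R := gamma ^- k * lambda0.

Fixpoint uhat (eta : R -> R) (a : nat -> 'rV[R]_n) (b : nat -> R)
    (gamma lambda0 : R) (k : nat) (x : 'rV[R]_n) : R :=
  match k with
  | 0 => affine_fun (a 0) (b 0) x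
  | k'.+1 =>
      let p := uhat eta a b gamma lambda0 k' x in
      let uk := affine_fun (a k) (b k) x in
      let l := lam gamma lambda0 k in
      2^-1 * (p + uk + l^-1 * eta (l * (p - uk)))
  end.

End Defs.

Definition smooth_fun (R : realType) (f : R -> R) : Prop :=
  forall (m : nat) (t : R), derivable (derive1n m f) t 1.

(* Main.v *)
Require Import Defs.
From HB Require Import structures.
From mathcomp Require Import all_boot all_order all_algebra.
From mathcomp Require Import all_classical all_reals all_analysis.
From mathcomp Require Import ring lra.
Import Order.TTheory GRing.Theory Num.Theory.
Import numFieldNormedType.Exports.
Local Open Scope ring_scope.
Local Open Scope classical_set_scope.
Section EtaFacts.
Context (R : realType) (eta : R -> R).
Definition Hsm := smooth_fun eta.
Definition Habs := forall t, 2^-1 <= `|t| -> eta t = `|t|.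

Lemma eta_d1_pos t : Habs -> 2^-1 < t -> eta^`() t = 1.
Proof.
move=> he ht; rewrite derive1E.
rewrite (@near_eq_derive _ _ _ eta id t 1) ?derive_id //.
near=> y; rewrite he /=.
  rewrite gtr0_norm //; apply: lt_trans (_ : 2^-1 < y); first by rewrite invr_gt0.
  by near: y; apply: lt_nbhsr.
rewrite ltW // (lt_le_trans _ (ler_norm y)) //.
by near: y; apply: lt_nbhsr.
Unshelve. all: by end_near. Qed.

Lemma eta_d1_neg t : Habs -> t < - 2^-1 -> eta^`() t = -1.
Proof.
move=> he ht; rewrite derive1E.
rewrite (@near_eq_derive _ _ _ eta -%R t 1) ?derive_val //.
near=> y.
have hy : y < - 2^-1 by near: y; apply: lt_nbhsl.
have h2 : (0 : R) < 2^-1 by rewrite invr_gt0.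
rewrite he /=.
  rewrite ltr0_norm //; lra.
rewrite ltr0_norm; lra.
Unshelve. all: by end_near. Qed.

Lemma eta_der t : Hsm -> derivable eta t 1.
Proof. by move=> hs; exact: (hs 0%N t). Qed.

Lemma eta_d1_der t : Hsm -> derivable eta^`() t 1.
Proof. by move=> hs; exact: (hs 1%N t). Qed.

Lemma eta_d2_der t : Hsm -> derivable eta^`()^`() t 1.
Proof. by move=> hs; exact: (hs 2%N t). Qed.

Lemma eta_d2_zero t : Habs -> 2^-1 < `|t| -> eta^`()^`() t = 0.
Proof.
move=> he ht; rewrite derive1E.
have [t0|t0] := leP 0 t.
  rewrite ger0_norm // in ht.
  rewrite (@near_eq_derive _ _ _ eta^`() (cst 1) t 1) ?derive_cst //.
  near=> y; rewrite eta_d1_pos //.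
  by near: y; apply: lt_nbhsr.
rewrite ltr0_norm // ltrNr in ht.
rewrite (@near_eq_derive _ _ _ eta^`() (cst (-1)) t 1) ?derive_cst //.
near=> y; rewrite eta_d1_neg //.
by near: y; apply: lt_nbhsl.
Unshelve. all: by end_near. Qed.

Lemma eta_d1_mono x y : Hsm -> (forall t, 0 <= derive1n 2 eta t) ->
  x <= y -> eta^`() x <= eta^`() y.
Proof.
move=> hs h2 xy.
apply: (@ger0_derive1_ndecr _ _ x y) => //.
- by move=> z _; exact: eta_d1_der.
- by move=> z _; exact: (h2 z).
- by apply: derivable_within_continuous => z _; exact: eta_d1_der.
Qed.

Lemma eta_d1_bnd t : Hsm -> Habs -> (forall t, 0 <= derive1n 2 eta t) ->
  `|eta^`() t| <= 1.
Proof.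
move=> hs he h2; rewrite ler_norml; apply/andP; split.
  rewrite -(@eta_d1_neg (- `|t| - 1)) //; last first.
    have := normr_ge0 t; have : (2^-1 : R) < 1 by rewrite invf_lt1 // ltr1n.
    lra.
  apply: eta_d1_mono => //; have := ler_norm (-t); rewrite normrN; lra.
rewrite -(@eta_d1_pos (`|t| + 1)) //; last first.
  have := normr_ge0 t; have : (2^-1 : R) < 1 by rewrite invf_lt1 // ltr1n.
  lra.
apply: eta_d1_mono => //; have := ler_norm t; lra.
Qed.

Lemma eta_d2_bnd : Hsm -> Habs -> (forall t, 0 <= derive1n 2 eta t) ->
  exists M, forall t, 0 <= eta^`()^`() t <= M.
Proof.
move=> hs he h2.
have [c _ hc] := @EVT_max R (eta^`()^`()) (-1) 1 (ltW (lt_trans (ltrN10 R) ltr01))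
  (derivable_within_continuous (fun z _ => eta_d2_der z hs)).
exists (eta^`()^`() c) => t; rewrite (h2 t) /=.
have [tl|tl] := leP `|t| 1.
  by apply: hc; rewrite in_itv /= -ler_norml.
rewrite eta_d2_zero //; first exact: (h2 c).
apply: lt_trans tl; by rewrite invf_lt1 // ltr1n.
Qed.

Lemma eta_lip x y : Hsm -> Habs -> (forall t, 0 <= derive1n 2 eta t) ->
  x <= y -> exists2 c, x <= c <= y & eta y - eta x = derive1 eta c * (y - x).
Proof.
move=> hs he h2 xy.
have hd : forall z, z \in `]x, y[%R -> is_derive z 1 eta (derive1 eta z).
  by move=> z _; rewrite derive1E; apply: derivableP; exact: eta_der.
have [c hc ->] := @MVT_segment R eta (derive1 eta) x y xy hd
  (derivable_within_continuous (fun z _ => eta_der z hs)).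
by exists c => //; rewrite in_itv /= in hc.
Qed.

Lemma eta_lip1 x y : Hsm -> Habs -> (forall t, 0 <= derive1n 2 eta t) ->
  `|eta y - eta x| <= `|y - x|.
Proof.
move=> hs he h2.
wlog xy : x y / x <= y.
  move=> H; have [/H //|/ltW yx] := leP x y.
  by rewrite -normrN opprB -(normrN (y - x)) opprB; apply: H.
have [c _ ->] := eta_lip x y hs he h2 xy.
rewrite normrM ler_piMl //; exact: eta_d1_bnd.
Qed.

Lemma eta_convex x y t : Hsm -> Habs -> (forall t, 0 <= derive1n 2 eta t) ->
  0 <= t -> t <= 1 -> eta (t * x + (1 - t) * y) <= t * eta x + (1 - t) * eta y.
Proof.
move=> hs he h2.
wlog xy : x y t / x <= y.
  move=> H t0 t1; have [/H|/ltW yx] := leP x y; first by apply.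
  have := H y x (1 - t) yx; rewrite subKr.
  by rewrite (addrC (t * x)) (addrC (t * eta x)); apply; lra.
move=> t0 t1; set z := t * x + (1 - t) * y.
have xz : x <= z by rewrite /z; nra.
have zy : z <= y by rewrite /z; nra.
have [c1 /andP[_ c1z] e1] := eta_lip x z hs he h2 xz.
have [c2 /andP[zc2 _] e2] := eta_lip z y hs he h2 zy.
have m := eta_d1_mono c1 c2 hs h2 (le_trans c1z zc2).
move: e1 e2.
have -> : z - x = (1 - t) * (y - x) by rewrite /z; ring.
have -> : y - z = t * (y - x) by rewrite /z; ring.
move=> e1 e2.
have : 0 <= t * (1 - t) * (y - x) * (derive1 eta c2 - derive1 eta c1).
  apply: mulr_ge0; last by rewrite subr_ge0.
  apply: mulr_ge0; last by rewrite subr_ge0.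
  by apply: mulr_ge0; rewrite ?subr_ge0.
nra.
Qed.
End EtaFacts.
Section Vec.
Context (R : realType) (n : nat).
Local Notation V := 'rV[R]_n.

Lemma dotv_ge0 (x : V) : 0 <= dotv x x.
Proof. by apply: sumr_ge0 => i _; exact: sqr_ge0. Qed.

Lemma enorm_ge0 (x : V) : 0 <= enorm x.
Proof. exact: sqrtr_ge0. Qed.

Lemma enorm_sq (x : V) : enorm x ^+ 2 = dotv x x.
Proof. by rewrite /enorm sqr_sqrtr // dotv_ge0. Qed.

Lemma dotvC (x y : V) : dotv x y = dotv y x.
Proof. by apply: eq_bigr => i _; rewrite mulrC. Qed.

Lemma lagrange (x y : V) :
  2 * (dotv x x * dotv y y - dotv x y ^+ 2) =
  \sum_(i < n) \sum_(j < n) (x ord0 i * y ord0 j - x ord0 j * y ord0 i) ^+ 2.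
Proof.
pose S1 := \sum_(i < n) \sum_(j < n) (x ord0 i * x ord0 i) * (y ord0 j * y ord0 j).
pose S2 := \sum_(i < n) \sum_(j < n) (y ord0 i * y ord0 i) * (x ord0 j * x ord0 j).
pose S3 := \sum_(i < n) \sum_(j < n) (x ord0 i * y ord0 i) * (x ord0 j * y ord0 j).
have h1 : dotv x x * dotv y y = S1 by rewrite /dotv big_distrlr.
have h2 : dotv x x * dotv y y = S2.
  by rewrite mulrC /dotv big_distrlr.
have h3 : dotv x y ^+ 2 = S3 by rewrite expr2 /dotv big_distrlr.
have h4 : S2 = \sum_(i < n) \sum_(j < n) (x ord0 j * x ord0 j) * (y ord0 i * y ord0 i).
  rewrite /S2; apply: eq_bigr => i _; apply: eq_bigr => j _.
  by rewrite mulrC.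
have E : forall i j : 'I_n, (x ord0 i * y ord0 j - x ord0 j * y ord0 i) ^+ 2 =
   ((x ord0 i * x ord0 i) * (y ord0 j * y ord0 j) + (x ord0 j * x ord0 j) * (y ord0 i * y ord0 i))
   - 2 * ((x ord0 i * y ord0 i) * (x ord0 j * y ord0 j)).
  by move=> i j; ring.
have -> : \sum_(i < n) \sum_(j < n) (x ord0 i * y ord0 j - x ord0 j * y ord0 i) ^+ 2
  = S1 + S2 - 2 * S3.
  rewrite h4 /S1 /S3 mulr_sumr -big_split -sumrB /=; apply: eq_bigr => i _.
  rewrite mulr_sumr -big_split -sumrB /=; apply: eq_bigr => j _.
  exact: E.
rewrite -h2 -h1 -h3; ring.
Qed.

Lemma cauchy_schwarz (x y : V) : `|dotv x y| <= enorm x * enorm y.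
Proof.
have H : dotv x y ^+ 2 <= dotv x x * dotv y y.
  have : 0 <= 2 * (dotv x x * dotv y y - dotv x y ^+ 2).
    by rewrite lagrange; apply: sumr_ge0 => i _; apply: sumr_ge0 => j _; exact: sqr_ge0.
  rewrite pmulr_rge0 // subr_ge0 //.
rewrite /enorm -sqrtrM ?dotv_ge0 //.
rewrite -(sqrtr_sqr (dotv x y)) ler_sqrt //.
by apply: mulr_ge0; exact: dotv_ge0.
Qed.

End Vec.
Section Der.
Context (R : realType) (n : nat).
Local Notation V := 'rV[R]_n.
Implicit Types (f g : V -> R) (x v : V).

Lemma dfD f g x : differentiable f x -> differentiable g x ->
  differentiable (fun y => f y + g y) x.
Proof. move=> hf hg; exact: differentiableD. Qed.
Lemma dfB f g x : differentiable f x -> differentiable g x ->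
  differentiable (fun y => f y - g y) x.
Proof. move=> hf hg; exact: differentiableB. Qed.
Lemma dfM f g x : differentiable f x -> differentiable g x ->
  differentiable (fun y => f y * g y) x.
Proof. move=> hf hg; exact: differentiableM. Qed.
Lemma dfC (c : R) x : differentiable (fun _ : V => c) x.
Proof. exact: differentiable_cst. Qed.
Lemma dfZ (c : R) f x : differentiable f x -> differentiable (fun y => c * f y) x.
Proof. move=> hf; apply: dfM => //; exact: dfC. Qed.
Lemma dfcomp (h : R -> R) f x : differentiable f x -> derivable h (f x) 1 ->
  differentiable (fun y => h (f y)) x.
Proof.
move=> hf hh; apply: (@differentiable_comp _ _ _ _ f h) => //.
exact/derivable1_diffP.
Qed.

Lemma drD f g x v : differentiable f x -> differentiable g x ->
  'D_v (fun y => f y + g y) x = 'D_v f x + 'D_v g x.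
Proof. move=> hf hg; apply: deriveD; exact: diff_derivable. Qed.
Lemma drB f g x v : differentiable f x -> differentiable g x ->
  'D_v (fun y => f y - g y) x = 'D_v f x - 'D_v g x.
Proof. move=> hf hg; apply: deriveB; exact: diff_derivable. Qed.
Lemma drM f g x v : differentiable f x -> differentiable g x ->
  'D_v (fun y => f y * g y) x = f x * 'D_v g x + g x * 'D_v f x.
Proof. move=> hf hg; apply: deriveM; exact: diff_derivable. Qed.
Lemma drC (c : R) x v : 'D_v (fun _ : V => c) x = 0.
Proof. exact: derive_cst. Qed.
Lemma drZ (c : R) f x v : differentiable f x ->
  'D_v (fun y => c * f y) x = c * 'D_v f x.
Proof. move=> hf; rewrite drM //. all: try exact: dfC. by rewrite drC mulr0 addr0. Qed.
Lemma drcomp (h : R -> R) f x v : differentiable f x -> derivable h (f x) 1 ->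
  'D_v (fun y => h (f y)) x = 'D_v f x * derive1 h (f x).
Proof.
move=> hf hh.
rewrite (deriveE v (@dfcomp h f x hf hh)).
rewrite (@diff_comp _ _ _ _ f h) //; last exact/derivable1_diffP.
rewrite /= diff1E; last exact/derivable1_diffP.
by rewrite -deriveE.
Qed.

Lemma drlin f x v : differentiable f x ->
  'D_v f x = \sum_(i < n) v ord0 i * 'D_(@evec R n i) f x.
Proof.
move=> hf; rewrite !deriveE // {1}(row_sum_delta v) linear_sum.
apply: eq_bigr => i _; rewrite linearZ /=.
by rewrite deriveE.
Qed.

Lemma drcoord i x v : 'D_v (fun y : V => y ord0 i) x = v ord0 i.
Proof.
have := @derive_mx R V 1 n id x v (@derivable_id _ _ _ _).
rewrite derive_id => /(congr1 (fun M : 'M[R]_(1, n) => M ord0 i)); rewrite mxE.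
by move=> ->.
Qed.

Lemma dfcoord i x : differentiable (fun y : V => y ord0 i) x.
Proof. exact: differentiable_coord. Qed.

Lemma dotv_fun (a : V) : (fun x : V => dotv a x) = \sum_(i < n) (fun y : V => a ord0 i * y ord0 i).
Proof. by apply/funext => x; rewrite fct_sumE. Qed.

Lemma df_dotv (a : V) x : differentiable (fun y => dotv a y) x.
Proof.
rewrite dotv_fun; apply: differentiable_sum => i; apply: dfZ; exact: dfcoord.
Qed.

Lemma dr_dotv (a : V) x v : 'D_v (fun y => dotv a y) x = dotv a v.
Proof.
rewrite dotv_fun derive_sum; last first.
  by move=> i; apply: diff_derivable; apply: dfZ; exact: dfcoord.
apply: eq_bigr => i _; rewrite drZ ?drcoord //; exact: dfcoord.
Qed.

Lemma df_aff (a : V) b x : differentiable (affine_fun a b) x.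
Proof. apply: (@dfD (fun y => dotv a y) (fun _ => b)); [exact: df_dotv|exact: dfC]. Qed.

Lemma dr_aff (a : V) b x v : 'D_v (affine_fun a b) x = dotv a v.
Proof.
rewrite (@drD (fun y => dotv a y) (fun _ => b)) ?drC ?addr0 ?dr_dotv //.
all: try exact: df_dotv.
all: exact: dfC.
Qed.
End Der.
Section Step.
Context (R : realType) (n : nat) (eta : R -> R).
Hypothesis hs : @Hsm R eta.
Local Notation V := 'rV[R]_n.
Variables (p : V -> R) (a : V) (b l : R).
Hypothesis l0 : 0 < l.
Hypothesis hp : forall x, differentiable p x.
Let u := affine_fun a b.
Let s y := l * (p y - u y).
Let f y := 2^-1 * (p y + u y + l^-1 * eta (l * (p y - u y))).

Ltac dft := repeat first [ apply: hp | apply: df_aff | apply: df_dotv | apply: dfC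
  | apply: dfB | apply: dfD | apply: dfM | (apply: dfcomp; last exact: eta_der) ].

Lemma step_df x : differentiable f x.
Proof. rewrite /f /u; dft. Qed.

Lemma step_dr x v : 'D_v f x =
  2^-1 * ('D_v p x + dotv a v + derive1 eta (s x) * ('D_v p x - dotv a v)).
Proof.
rewrite /f /s /u.
rewrite drZ; last by dft.
rewrite drD; [|by dft|by dft].
rewrite drD; [|by dft|by dft].
rewrite drZ; last by dft.
rewrite drcomp; [|by dft|exact: eta_der].
rewrite drZ; last by dft.
rewrite drB; [|by dft|by dft].
rewrite dr_aff.
have ln : l != 0 by rewrite gt_eqF.
congr (_ * _); field; exact: ln.
Qed.

Section Second.
Variable v : V.
Hypothesis hpv : forall x, differentiable (fun y => 'D_v p y) x.

Ltac dft2 := repeat first [ apply: hp | apply: hpv | apply: df_aff | apply: df_dotv | apply: dfC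
  | apply: dfB | apply: dfD | apply: dfM
  | (apply: dfcomp; last (first [exact: eta_der | exact: eta_d1_der])) ].

Lemma step_fun : (fun y => 'D_v f y) =
  fun y => 2^-1 * ('D_v p y + dotv a v + derive1 eta (l * (p y - affine_fun a b y)) * ('D_v p y - dotv a v)).
Proof. by apply/funext => y; rewrite step_dr. Qed.

Lemma step_ddf x : differentiable (fun y => 'D_v f y) x.
Proof. rewrite step_fun; dft2. Qed.

Lemma step_ddr w x : 'D_w (fun y => 'D_v f y) x =
  2^-1 * ((1 + derive1 eta (s x)) * 'D_w (fun y => 'D_v p y) x
    + l * derive1 (derive1 eta) (s x) * ('D_w p x - dotv a w) * ('D_v p x - dotv a v)).
Proof.
rewrite step_fun /s /u.
rewrite drZ; last by dft2.
rewrite drD; [|by dft2|by dft2].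
rewrite drD; [|by dft2|by dft2].
rewrite drC addr0.
rewrite drM; [|by dft2|by dft2].
rewrite drB; [|by dft2|by dft2].
rewrite drC subr0.
rewrite drcomp; [|by dft2|exact: eta_d1_der].
rewrite drZ; last by dft2.
rewrite drB; [|by dft2|by dft2].
rewrite dr_aff.
congr (_ * _); ring.
Qed.
End Second.
End Step.
Section Conv.
Context (R : realType) (eta : R -> R).
Hypothesis hs : @Hsm R eta.
Hypothesis he : @Habs R eta.
Hypothesis h2 : forall t, 0 <= derive1n 2 eta t.
Variable l : R.
Hypothesis l0 : 0 < l.
Let g P U := 2^-1 * (P + U + l^-1 * eta (l * (P - U))).

Lemma g_mono P P' U : P <= P' -> g P U <= g P' U.
Proof.
move=> PP; rewrite /g ler_pM2l ?invr_gt0 //.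
have := @eta_lip1 R eta (l * (P - U)) (l * (P' - U)) hs he h2.
have -> : l * (P' - U) - l * (P - U) = l * (P' - P) by ring.
have hn : `|l * (P' - P)| = l * (P' - P).
  by rewrite ger0_norm // mulr_ge0 // ?subr_ge0 // ltW.
rewrite hn.
move=> H.
have : - (l * (P' - P)) <= eta (l * (P' - U)) - eta (l * (P - U)).
  by have := ler_norm (- (eta (l * (P' - U)) - eta (l * (P - U)))); rewrite normrN opprB; lra.
move=> H2.
have il : 0 < l^-1 by rewrite invr_gt0.
have -> : l^-1 * eta (l * (P' - U)) = l^-1 * eta (l * (P - U)) + l^-1 * (eta (l * (P' - U)) - eta (l * (P - U))) by ring.
have : l^-1 * (- (l * (P' - P))) <= l^-1 * (eta (l * (P' - U)) - eta (l * (P - U))).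
  by rewrite ler_pM2l.
have -> : l^-1 * (- (l * (P' - P))) = - (P' - P) by field; rewrite gt_eqF.
lra.
Qed.

Lemma g_conv P1 U1 P2 U2 t : 0 <= t -> t <= 1 ->
  g (t * P1 + (1 - t) * P2) (t * U1 + (1 - t) * U2) <= t * g P1 U1 + (1 - t) * g P2 U2.
Proof.
move=> t0 t1; rewrite /g.
have -> : l * (t * P1 + (1 - t) * P2 - (t * U1 + (1 - t) * U2)) =
  t * (l * (P1 - U1)) + (1 - t) * (l * (P2 - U2)) by ring.
have := @eta_convex R eta (l * (P1 - U1)) (l * (P2 - U2)) t hs he h2 t0 t1.
have il : 0 < l^-1 by rewrite invr_gt0.
move=> /(ler_wpM2l (ltW il)) => H3.
lra.
Qed.
End Conv.

Lemma aff_conv (R : realType) (n : nat) (a : 'rV[R]_n) (b : R) x y (t : R) :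
  affine_fun a b (t *: x + (1 - t) *: y) = t * affine_fun a b x + (1 - t) * affine_fun a b y.
Proof.
rewrite /affine_fun /dotv.
have -> : \sum_(i < n) a ord0 i * (t *: x + (1 - t) *: y) ord0 i =
  t * (\sum_(i < n) a ord0 i * x ord0 i) + (1 - t) * (\sum_(i < n) a ord0 i * y ord0 i).
  rewrite !mulr_sumr -big_split; apply: eq_bigr => i _; rewrite !mxE /=; ring.
ring.
Qed.

Lemma step_convex (R : realType) (n : nat) (eta : R -> R) (p : 'rV[R]_n -> R) a b l :
  @Hsm R eta -> @Habs R eta -> (forall t, 0 <= derive1n 2 eta t) -> 0 < l ->
  convex_fun p ->
  convex_fun (fun y => 2^-1 * (p y + affine_fun a b y + l^-1 * eta (l * (p y - affine_fun a b y)))).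
Proof.
move=> hs he h2 l0 cp x y t t0 t1.
rewrite aff_conv.
have H1 := @g_mono R eta hs he h2 l l0 _ _ (t * affine_fun a b x + (1 - t) * affine_fun a b y) (cp x y t t0 t1).
have H2 := @g_conv R eta hs he h2 l l0 (p x) (affine_fun a b x) (p y) (affine_fun a b y) t t0 t1.
exact: (le_trans H1 H2).
Qed.

Lemma bilin_step (R : realType) (n : nat) (h : 'I_n -> 'I_n -> R) (c vv ww : 'I_n -> R) (al be : R) :
  \sum_(i < n) \sum_(j < n) vv i * (al * h i j + be * c j * c i) * ww j =
  al * (\sum_(i < n) \sum_(j < n) vv i * h i j * ww j)
  + be * ((\sum_(i < n) vv i * c i) * (\sum_(j < n) ww j * c j)).
Proof.
rewrite big_distrlr !mulr_sumr -big_split; apply: eq_bigr => i _ /=.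
rewrite !mulr_sumr -big_split; apply: eq_bigr => j _ /=; ring.
Qed.

Lemma grad_bnd (R : realType) (n : nat) (p : 'rV[R]_n -> R) x :
  differentiable p x -> (forall v, `|'D_v p x| <= enorm v) -> enorm (grad p x) <= 1.
Proof.
move=> dp hb.
have e2 : enorm (grad p x) ^+ 2 = 'D_(grad p x) p x.
  rewrite enorm_sq (@drlin R n p x (grad p x) dp) /dotv; apply: eq_bigr => i _.
  by rewrite /grad mxE.
have := hb (grad p x); rewrite -e2 => H.
have g0 := @enorm_ge0 R n (grad p x).
move: H; rewrite normrX ger0_norm // expr2 => H.
nra.
Qed.
Lemma comb_bnd (R : realType) (D d e V : R) : `|D| <= V -> `|d| <= V -> `|e| <= 1 ->
  `|2^-1 * (D + d + e * (D - d))| <= V.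
Proof.
rewrite !ler_norml => /andP[D1 D2] /andP[d1 d2] /andP[e1 e2].
have h : 2^-1 * (D + d + e * (D - d)) = ((1 + e) * D + (1 - e) * d) / 2 by field.
rewrite h ler_pdivlMr // ler_pdivrMr // ; apply/andP; split; nra.
Qed.

Lemma hess_bnd (R : realType) (al be B X Y l M g nv nw : R) :
  0 <= al -> al <= 1 -> 0 <= be -> be <= l * M / 2 ->
  `|B| <= 4 * M * (g * l) * nv * nw -> `|X| <= 2 * nv -> `|Y| <= 2 * nw ->
  0 <= nv -> 0 <= nw -> 0 < l -> 0 <= M -> 0 < g -> g < 2^-1 ->
  `|al * B + be * (X * Y)| <= 4 * M * l * nv * nw.
Proof.
move=> a0 a1 b0 b1 hB hX hY v0 w0 l0 M0 g0 g1.
apply: le_trans (ler_normD _ _) _.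
rewrite !normrM (ger0_norm a0) (ger0_norm b0).
have e1 : al * `|B| <= 4 * M * (g * l) * nv * nw.
  apply: le_trans hB; rewrite ler_piMl //.
have e2 : `|X| * `|Y| <= (2 * nv) * (2 * nw).
  by apply: ler_pM => //; rewrite normr_ge0.
have e3 : be * (`|X| * `|Y|) <= (l * M / 2) * ((2 * nv) * (2 * nw)).
  by apply: ler_pM => //; apply: mulr_ge0; rewrite normr_ge0.
have e4 : 4 * M * (g * l) * nv * nw + (l * M / 2) * ((2 * nv) * (2 * nw))
   = (4 * g + 2) * (M * l * nv * nw) by field.
have e5 : 0 <= M * l * nv * nw by rewrite !mulr_ge0 // ltW.
have e6 : (4 * g + 2) * (M * l * nv * nw) <= 4 * (M * l * nv * nw).
  by apply: ler_wpM2r => //; lra.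
have e7 : 4 * (M * l * nv * nw) = 4 * M * l * nv * nw by ring.
lra.
Qed.

Lemma al_ge0 (R : realType) (e : R) : -1 <= e -> 0 <= 2^-1 * (1 + e).
Proof. move=> h; lra. Qed.
Lemma al_le1 (R : realType) (e : R) : e <= 1 -> 2^-1 * (1 + e) <= 1.
Proof. move=> h; lra. Qed.
Lemma be_le (R : realType) (l e2 M : R) : l * e2 <= l * M -> 2^-1 * l * e2 <= l * M / 2.
Proof. move=> h; lra. Qed.
Lemma two_bnd (R : realType) (A B V : R) : `|A| <= V -> `|B| <= V -> `|A| + `|B| <= 2 * V.
Proof. move=> h1 h2; lra. Qed.

Section Main.
Context (R : realType) (n q : nat) (a : nat -> 'rV[R]_n) (b : nat -> R) (eta : R -> R).
Hypothesis ha : forall m, (m <= q)%N -> enorm (a m) = 1.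
Hypothesis hs : @Hsm R eta.
Hypothesis he : @Habs R eta.
Hypothesis h2 : forall t, 0 <= derive1n 2 eta t.
Variable M : R.
Hypothesis hM : forall t, 0 <= derive1 (derive1 eta) t <= M.
Variables gamma lambda0 : R.
Hypothesis g0 : 0 < gamma.
Hypothesis g1 : gamma < 2^-1.
Hypothesis l1 : 1 < lambda0.

Lemma lam_pos k : 0 < lam gamma lambda0 k.
Proof. by rewrite /lam mulr_gt0 ?invr_gt0 ?exprn_gt0 // (lt_trans ltr01). Qed.

Lemma lamS k : lam gamma lambda0 k = gamma * lam gamma lambda0 k.+1.
Proof.
rewrite /lam exprS invfM mulrA mulrA divff ?mul1r //; first by rewrite gt_eqF.
Qed.

Lemma M0 : 0 <= M.
Proof. by have /andP[h1 h2'] := hM 0; exact: le_trans h2'. Qed.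

Lemma main_ind k : (k <= q)%N ->
 let p := uhat eta a b gamma lambda0 k in
 [/\ forall x, differentiable p x,
  forall x v, `|'D_v p x| <= enorm v,
  forall x v, differentiable (fun y => 'D_v p y) x,
  forall x v w, `|bilin (hess p x) v w| <= 4 * M * lam gamma lambda0 k * enorm v * enorm w
  & convex_fun p].
Proof.
elim: k => [|k IH] kq; cbv zeta.
  have E0 : uhat eta a b gamma lambda0 0 = affine_fun (a 0%N) (b 0%N) by apply/funext.
  have a0 := ha 0%N (leq0n q).
  rewrite E0; split.
  - by move=> x; exact: df_aff.
  - by move=> x v; rewrite dr_aff; have := @cauchy_schwarz R n (a 0%N) v; rewrite a0 mul1r.
  - move=> x v; have -> : (fun y => 'D_v (affine_fun (a 0%N) (b 0%N)) y) = fun _ => dotv (a 0%N) v.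
      by apply/funext => y; rewrite dr_aff.
    exact: dfC.
  - move=> x v w.
    have -> : bilin (hess (affine_fun (a 0%N) (b 0%N)) x) v w = 0.
      rewrite /bilin big1 // => i _; rewrite big1 // => j _; rewrite /hess mxE.
      have -> : (fun y => 'D_(@evec R n i) (affine_fun (a 0%N) (b 0%N)) y) = fun _ => dotv (a 0%N) (@evec R n i).
        by apply/funext => y; rewrite dr_aff.
      by rewrite drC mulr0 mul0r.
    have L := ltW (lam_pos 0); rewrite normr0.
    apply: mulr_ge0; last exact: enorm_ge0.
    apply: mulr_ge0; last exact: enorm_ge0.
    apply: mulr_ge0; last exact: L.
    apply: mulr_ge0 => //; exact: M0.
  - move=> x y t t0 t1; rewrite aff_conv; exact: lexx.
have kq' : (k <= q)%N by apply: ltnW.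
have [d1 d2 d3 d4 d5] := IH kq'.
set P := uhat eta a b gamma lambda0 k in d1 d2 d3 d4 d5 *.
set l := lam gamma lambda0 k.+1.
set ak := a k.+1; set bk := b k.+1.
have l0 : 0 < l := lam_pos k.+1.
have E : uhat eta a b gamma lambda0 k.+1 =
  (fun y => 2^-1 * (P y + affine_fun ak bk y + l^-1 * eta (l * (P y - affine_fun ak bk y)))).
  by apply/funext.
have aN : enorm ak = 1 := ha k.+1 kq.
have dv : forall v, `|dotv ak v| <= enorm v.
  by move=> v; have := @cauchy_schwarz R n ak v; rewrite aN mul1r.
rewrite E; split.
- exact: step_df.
- move=> x v; rewrite (@step_dr R n eta hs P ak bk l l0 d1).
  apply: comb_bnd => //; exact: eta_d1_bnd.
- move=> x v; exact: (@step_ddf R n eta hs P ak bk l l0 d1 v (d3 ^~ v)).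
- move=> x v w.
  pose c := fun j : 'I_n => 'D_(@evec R n j) P x - dotv ak (@evec R n j).
  have lin_a : forall v : 'rV[R]_n, \sum_(i < n) v ord0 i * dotv ak (@evec R n i) = dotv ak v.
    move=> u; rewrite -(@dr_aff R n ak bk x u) (@drlin R n _ x u (@df_aff R n ak bk x)).
    by apply: eq_bigr => i _; rewrite dr_aff.
  have sc : forall v : 'rV[R]_n, \sum_(i < n) v ord0 i * c i = 'D_v P x - dotv ak v.
    move=> u; rewrite /c; under eq_bigr do rewrite mulrBr.
    by rewrite sumrB lin_a -(@drlin R n _ x u (d1 x)).
  set e := derive1 eta (l * (P x - affine_fun ak bk x)).
  set e2 := derive1 (derive1 eta) (l * (P x - affine_fun ak bk x)).
  have H : bilin (hess (fun y => 2^-1 * (P y + affine_fun ak bk y + l^-1 * eta (l * (P y - affine_fun ak bk y)))) x) v w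
     = (2^-1 * (1 + e)) * bilin (hess P x) v w
       + (2^-1 * l * e2) * ((\sum_(i < n) v ord0 i * c i) * (\sum_(j < n) w ord0 j * c j)).
    rewrite /bilin -bilin_step; apply: eq_bigr => i _; apply: eq_bigr => j _.
    rewrite /hess !mxE.
    rewrite (@step_ddr R n eta hs P ak bk l l0 d1 (@evec R n i) (d3 ^~ _) (@evec R n j) x) /=.
    rewrite -/e -/e2 /c; congr (_ * _ * _).
    by rewrite mulrDr !mulrA.
  rewrite H sc sc.
  have hl := lamS k; rewrite -/l in hl.
  have eb := @eta_d1_bnd R eta (l * (P x - affine_fun ak bk x)) hs he h2; rewrite -/e in eb.
  move: eb; rewrite ler_norml => /andP[eb1 eb2].
  have /andP[m1 m2] := hM (l * (P x - affine_fun ak bk x)); rewrite -/e2 in m1 m2.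
  apply: (@hess_bnd R _ _ _ _ _ l M gamma) => //.
  + exact: al_ge0.
  + exact: al_le1.
  + by apply: mulr_ge0 => //; apply: mulr_ge0; rewrite ?invr_ge0 ?ler0n // ltW.
  + have : l * e2 <= l * M by rewrite ler_pM2l.
    exact: be_le.
  + by rewrite -hl; apply: d4.
  + apply: le_trans (ler_normB _ _) _; exact: two_bnd (d2 x v) (dv v).
  + apply: le_trans (ler_normB _ _) _; exact: two_bnd (d2 x w) (dv w).
  + exact: enorm_ge0.
  + exact: enorm_ge0.
  + exact: M0.
- exact: step_convex.
Qed.
End Main.
Theorem lemma2p8 (R : realType) (n q : nat) (a : nat -> 'rV[R]_n) (b : nat -> R)
    (eta : R -> R) :
  (3 <= n)%N ->
  (forall m, (m <= q)%N -> enorm (a m) = 1) ->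
  compact [set x : 'rV[R]_n | forall m, (m <= q)%N -> affine_fun (a m) (b m) x <= 0] ->
  (exists x0, interior
     [set x : 'rV[R]_n | forall m, (m <= q)%N -> affine_fun (a m) (b m) x <= 0] x0) ->
  smooth_fun eta ->
  (forall t, eta (- t) = eta t) ->
  (forall t, 2^-1 <= `|t| -> eta t = `|t|) ->
  (forall t, 0 <= derive1n 2 eta t) ->
  exists C : R, forall gamma lambda0 : R,
    0 < gamma -> gamma < 2^-1 -> 1 < lambda0 ->
    forall k, (k <= q)%N ->
      let f := uhat eta a b gamma lambda0 k in
      [/\ (forall x, differentiable f x /\ enorm (grad f x) <= C),
          convex_fun f &
          (forall x, (forall i, differentiable (fun y => derive f y (@evec R n i)) x) /\
             forall v w, `|bilin (hess f x) v w|
                          <= C * lam gamma lambda0 k * enorm v * enorm w)].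
Proof.
move=> n3 ha cpt int hs hsym he h2.
have [M hM] := @eta_d2_bnd R eta hs he h2.
have M0' := @M0 R eta M hM.
exists (1 + 4 * M) => gamma lambda0 g0 g1 l1 k kq.
have [d1 d2 d3 d4 d5] := @main_ind R n q a b eta ha hs he h2 M hM gamma lambda0 g0 g1 l1 k kq.
cbv zeta; split.
- move=> x; split; first exact: d1.
  have := @grad_bnd R n _ x (d1 x) (d2 x); lra.
- exact: d5.
- move=> x; split; first by move=> i; exact: d3.
  move=> v w; apply: le_trans (d4 x v w) _.
  have L : 0 <= lam gamma lambda0 k by apply: ltW; apply: lam_pos.
  have := @enorm_ge0 R n v; have := @enorm_ge0 R n w.
  set lk := lam gamma lambda0 k; set ev := enorm v; set ew := enorm w.
  move=> w0 v0.
  have : 0 <= lk * ev * ew by apply: mulr_ge0 => //; apply: mulr_ge0.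
  have -> : 4 * M * lk * ev * ew = 4 * M * (lk * ev * ew) by ring.
  have -> : (1 + 4 * M) * lk * ev * ew = (1 + 4 * M) * (lk * ev * ew) by ring.
  move=> h; apply: ler_wpM2r => //; lra.
Qed.
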